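(* Let $A,B,C\in\mathbb C^{2\times2}$ be Hermitian, let $\xi>0$ and $\varepsilon\ge 0$, and suppose $\Delta(B)=\lambda_{\max}(B)-\lambda_{\min}(B)>\xi$. If $\|[A,B]\|\le\varepsilon$ and $\|[B,C]\|\le\varepsilon$, then $$\|[A,C]\|\le\frac{2\varepsilon}{\xi}\Big(\|A\|+\|C\|+\frac{\varepsilon}{\xi}\Big).$$ In particular, if moreover $\|A\|\le1$, $\|C\|\le1$ and $\xi\ge\varepsilon>0$, then $\|[A,C]\|\le\frac{4\varepsilon}{\xi}+\frac{2\varepsilon^2}{\xi^2}\le\frac{6\varepsilon}{\xi}$.
   Context: $\|\cdot\|$ is the operator norm, $[X,Y]=XY-YX$; $\lambda_{\max},\lambda_{\min}$ denote the largest and smallest eigenvalues. *)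

(* Defs.v *)
From HB Require Import structures.
From mathcomp Require Import all_boot all_order all_algebra.
From mathcomp Require Import complex.
From mathcomp Require Import boolp classical_sets reals.
Set Implicit Arguments. Unset Strict Implicit. Unset Printing Implicit Defensive.
Import Order.TTheory GRing.Theory Num.Theory.
Local Open Scope ring_scope.
Local Open Scope classical_set_scope.

Section Defs.
Variable R : realType.

Definition vnorm (x : 'cV[R[i]]_2) : R :=
  Num.sqrt (\sum_(k < 2) (Normc.normc (x k ord0)) ^+ 2).

Definition opnorm (M : 'M[R[i]]_2) : R :=
  sup [set vnorm (M *m x) | x in [set x : 'cV[R[i]]_2 | vnorm x = 1]].

Definition herm2 (M : 'M[R[i]]_2) : Prop :=
  forall i j : 'I_2, M i j = conjc (M j i).

Definition comm (X Y : 'M[R[i]]_2) : 'M[R[i]]_2 := X *m Y - Y *m X.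

Definition lmax (M : 'M[R[i]]_2) : R :=
  sup [set l : R | eigenvalue M (Complex l 0)].
Definition lmin (M : 'M[R[i]]_2) : R :=
  inf [set l : R | eigenvalue M (Complex l 0)].
End Defs.

(* Main.v *)
Require Import Defs.
From HB Require Import structures.
From mathcomp Require Import all_boot all_order all_algebra.
From mathcomp Require Import complex.
From mathcomp Require Import boolp classical_sets reals.
From mathcomp Require Import ring lra.
Import Order.TTheory GRing.Theory Num.Theory.
Local Open Scope ring_scope.

Section V.
Variable R : rcfType.
Record V3 := mkV { vx : R; vy : R; vz : R }.
Definition dot (u v : V3) := vx u * vx v + vy u * vy v + vz u * vz v.
Definition cross (u v : V3) := mkV (vy u * vz v - vz u * vy v)
  (vz u * vx v - vx u * vz v) (vx u * vy v - vy u * vx v).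
Definition vadd (u v : V3) := mkV (vx u + vx v) (vy u + vy v) (vz u + vz v).
Definition vsc (k : R) (v : V3) := mkV (k * vx v) (k * vy v) (k * vz v).
Definition nrm v := Num.sqrt (dot v v).

Lemma dot_ge0 v : 0 <= dot v v.
Proof. by rewrite /dot !addr_ge0 // -expr2 sqr_ge0. Qed.
Lemma nrm_ge0 v : 0 <= nrm v. Proof. exact: sqrtr_ge0. Qed.
Lemma nrm_sq v : nrm v ^+ 2 = dot v v. Proof. by rewrite sqr_sqrtr ?dot_ge0. Qed.
Lemma lagrange u v : dot (cross u v) (cross u v) + (dot u v) ^+ 2 = dot u u * dot v v.
Proof. case: u => a b c; case: v => d e f; rewrite /dot /cross /=; ring. Qed.
Lemma cs u v : `|dot u v| <= nrm u * nrm v.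
Proof.
rewrite -sqrtr_sqr /nrm -sqrtrM ?dot_ge0 // ler_sqrt; last by rewrite mulr_ge0 ?dot_ge0.
by rewrite -lagrange lerDr dot_ge0.
Qed.
Lemma nrm_cross_le u v : nrm (cross u v) <= nrm u * nrm v.
Proof.
rewrite /nrm -sqrtrM ?dot_ge0 // ler_sqrt; last by rewrite mulr_ge0 ?dot_ge0.
by rewrite -lagrange lerDl sqr_ge0.
Qed.
Lemma nrm_cross_perp {u v} : dot u v = 0 -> nrm (cross u v) = nrm u * nrm v.
Proof.
move=> h; rewrite /nrm -sqrtrM ?dot_ge0 // -lagrange h expr0n /= addr0 //.
Qed.
Lemma nrm_add u v : nrm (vadd u v) <= nrm u + nrm v.
Proof.
have h : dot (vadd u v) (vadd u v) = dot u u + 2 * dot u v + dot v v.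
  by case: u => a b c; case: v => d e f; rewrite /dot /vadd /=; ring.
rewrite {1}/nrm -[nrm u + nrm v]ger0_norm ?addr_ge0 ?nrm_ge0 // -sqrtr_sqr ler_sqrt ?sqr_ge0 //.
rewrite h sqrrD !nrm_sq lerD2r lerD2l.
have := cs u v; have := ler_norm (dot u v); lra.
Qed.
Lemma nrm_sc k v : nrm (vsc k v) = `|k| * nrm v.
Proof.
have h : dot (vsc k v) (vsc k v) = k ^+ 2 * dot v v.
  by case: v => a b c; rewrite /dot /vsc /=; ring.
by rewrite /nrm h sqrtrM ?sqr_ge0 // sqrtr_sqr.
Qed.
Lemma dotC u v : dot u v = dot v u.
Proof. rewrite /dot; ring. Qed.
Lemma perp1 b x : dot b (cross b x) = 0.
Proof. case: b => ? ? ?; case: x => ? ? ?; rewrite /dot /cross /=; ring. Qed.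
Lemma perp2 b x : dot (cross b x) b = 0.
Proof. by rewrite dotC perp1. Qed.
Lemma perp3 b x : dot b (cross x b) = 0.
Proof. case: b => ? ? ?; case: x => ? ? ?; rewrite /dot /cross /=; ring. Qed.
Lemma core_id a b c : vsc (dot b b ^+ 2) (cross a c) =
   vadd (vadd (vsc (dot a b) (cross b (cross b (cross c b))))
      (vsc (dot c b) (cross (cross b (cross a b)) b)))
      (cross (cross b (cross a b)) (cross b (cross c b))).
Proof.
case: a => ? ? ?; case: b => ? ? ?; case: c => ? ? ?.
rewrite /vsc /vadd /cross /dot /=; congr mkV; ring.
Qed.
Lemma core_ineq a b c : 0 < nrm b ->
  nrm b ^+ 2 * nrm (cross a c) <= nrm b * nrm a * nrm (cross c b)
     + nrm b * nrm c * nrm (cross a b) + nrm (cross a b) * nrm (cross c b).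
Proof.
move=> rgt0.
have idt := core_id a b c.
have hb : dot b b = nrm b ^+ 2 by rewrite nrm_sq.
have n1 : nrm (cross b (cross b (cross c b))) = nrm b * (nrm b * nrm (cross c b)).
  by rewrite nrm_cross_perp ?perp1 // nrm_cross_perp ?perp3.
have n2 : nrm (cross (cross b (cross a b)) b) = nrm b * nrm (cross a b) * nrm b.
  by rewrite nrm_cross_perp ?perp2 // nrm_cross_perp ?perp3.
have n3 : nrm (cross (cross b (cross a b)) (cross b (cross c b)))
    <= nrm b * nrm (cross a b) * (nrm b * nrm (cross c b)).
  apply: le_trans (nrm_cross_le _ _) _.
  by rewrite (nrm_cross_perp (perp3 b a)) (nrm_cross_perp (perp3 b c)).
have lhs : nrm (vsc (dot b b ^+ 2) (cross a c)) = nrm b ^+ 4 * nrm (cross a c).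
  by rewrite nrm_sc hb -exprM ger0_norm ?exprn_ge0 ?nrm_ge0.
set r := nrm b in rgt0 hb n1 n2 n3 lhs *.
have key : r ^+ 4 * nrm (cross a c) <=
   r * nrm a * (r * (r * nrm (cross c b))) + r * nrm c * (r * nrm (cross a b) * r)
   + r * nrm (cross a b) * (r * nrm (cross c b)).
  rewrite -lhs idt; apply: le_trans (nrm_add _ _) _; apply: lerD => //.
  apply: le_trans (nrm_add _ _) _; rewrite !nrm_sc n1 n2; apply: lerD.
    apply: ler_wpM2r; first by rewrite !mulr_ge0 ?nrm_ge0 // ltW.
    by rewrite mulrC; apply: cs.
  apply: ler_wpM2r; first by rewrite !mulr_ge0 ?nrm_ge0 // ltW.
  by rewrite mulrC; apply: cs.
have r2 : 0 < r ^+ 2 by rewrite exprn_gt0.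
rewrite -(ler_pM2l r2) mulrA -exprD; apply: le_trans key _.
rewrite le_eqVlt; apply/orP; left; apply/eqP; ring.
Qed.
Lemma cross_sym u v : nrm (cross u v) = nrm (cross v u).
Proof.
rewrite /nrm; congr Num.sqrt; case: u => ? ? ?; case: v => ? ? ?; rewrite /dot /cross /=; ring.
Qed.
Lemma final_ineq (a b c : V3) (eps xi oA oC : R) : 0 < xi -> 0 <= eps -> xi < 2 * nrm b ->
  2 * nrm (cross a b) <= eps -> 2 * nrm (cross b c) <= eps ->
  nrm a <= oA -> nrm c <= oC ->
  2 * nrm (cross a c) <= 2 * eps / xi * (oA + oC + eps / xi).
Proof.
move=> xi0 e0 hr hab hbc ha hc.
have r0 : 0 < nrm b by have := nrm_ge0 b; lra.
have core := core_ineq a b c r0.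
rewrite (cross_sym c b) in core.
set r := nrm b in hr r0 core.
set sab := nrm (cross a b) in hab core.
set sbc := nrm (cross b c) in hbc core.
set sac := nrm (cross a c) in core *.
have sab0 : 0 <= sab := nrm_ge0 _.
have sbc0 : 0 <= sbc := nrm_ge0 _.
have sac0 : 0 <= sac := nrm_ge0 _.
have na0 := nrm_ge0 a; have nc0 := nrm_ge0 c.
set na := nrm a in ha core na0. set nc := nrm c in hc core nc0.
have h1 : r ^+ 2 * sac <= r * (eps / 2) * (oA + oC) + eps ^+ 2 / 4.
  apply: le_trans core _.
  have : r * na * sbc <= r * oA * (eps / 2).
    apply: ler_pM; rewrite ?mulr_ge0 ?ler_pM //; try lra.
  have : r * nc * sab <= r * oC * (eps / 2).
    apply: ler_pM; rewrite ?mulr_ge0 ?ler_pM //; try lra.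
  have : sab * sbc <= (eps / 2) * (eps / 2) by apply: ler_pM; lra.
  lra.
pose t := xi / r.
have xit : xi = t * r by rewrite /t divfK // gt_eqF.
have t0 : 0 < t by rewrite /t divr_gt0.
have t2 : t < 2 by rewrite /t ltr_pdivrMr //; lra.
clearbody t.
have h2 : xi ^+ 2 * sac <= xi * eps * (oA + oC) + eps ^+ 2.
  rewrite xit.
  have A : t ^+ 2 * (r ^+ 2 * sac) <= t ^+ 2 * (r * (eps / 2) * (oA + oC) + eps ^+ 2 / 4).
    by apply: ler_wpM2l => //; rewrite exprn_ge0 // ltW.
  have hK : 0 <= t * r * eps * (oA + oC) by rewrite !mulr_ge0 //; lra.
  have B : (t / 2) * (t * r * eps * (oA + oC)) <= 1 * (t * r * eps * (oA + oC)).
    by apply: ler_wpM2r => //; lra.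
  have C : t ^+ 2 * eps ^+ 2 <= 4 * eps ^+ 2.
    apply: ler_wpM2r; first exact: sqr_ge0.
    have -> : (4 : R) = 2 ^+ 2 by rewrite expr2; lra.
    by rewrite ler_pXn2r // ?nnegrE; lra.
  have e1 : t ^+ 2 * (r ^+ 2 * sac) = (t * r) ^+ 2 * sac by ring.
  have e2 : t ^+ 2 * (r * (eps / 2) * (oA + oC) + eps ^+ 2 / 4) =
     (t / 2) * (t * r * eps * (oA + oC)) + (t ^+ 2 * eps ^+ 2) / 4 by ring.
  rewrite e1 e2 in A. lra.
have xi2 : 0 < xi ^+ 2 by rewrite exprn_gt0.
have -> : 2 * eps / xi * (oA + oC + eps / xi) = 2 * (xi * eps * (oA + oC) + eps ^+ 2) / xi ^+ 2.
  by field; rewrite gt_eqF.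
rewrite ler_pdivlMr // mulrAC; lra.
Qed.
End V.

Set Implicit Arguments. Unset Strict Implicit.
Local Notation RE := complex.Re.
Local Notation IM := complex.Im.
Section S.
Local Open Scope complex_scope.
Local Open Scope classical_set_scope.
Variable R : realType.
Implicit Types x y : R[i].
Lemma cReD x y : RE (x + y) = RE x + RE y. Proof. by case: x => a b; case: y => c d. Qed.
Lemma cImD x y : IM (x + y) = IM x + IM y. Proof. by case: x => a b; case: y => c d. Qed.
Lemma cReN x : RE (- x) = - RE x. Proof. by case: x => a b. Qed.
Lemma cImN x : IM (- x) = - IM x. Proof. by case: x => a b. Qed.
Lemma cReM x y : RE (x * y) = RE x * RE y - IM x * IM y. Proof. by case: x => a b; case: y => c d. Qed.
Lemma cImM x y : IM (x * y) = RE x * IM y + IM x * RE y. Proof. by case: x => a b; case: y => c d. Qed.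
Lemma cReJ x : RE (conjc x) = RE x. Proof. by case: x => a b. Qed.
Lemma cImJ x : IM (conjc x) = - IM x. Proof. by case: x => a b. Qed.
Lemma mul2E m (X : 'M[R[i]]_(m,2)) n (Y : 'M[R[i]]_(2,n)) i j :
  (X *m Y) i j = X i 0 * Y 0 j + X i 1 * Y 1 j.
Proof. rewrite mxE !big_ord_recl big_ord0 addr0. by have -> : (lift ord0 ord0 : 'I_2) = 1 by apply: val_inj. Qed.
Definition sqn (v : 'cV[R[i]]_2) : R :=
  RE (v 0 0) ^+ 2 + IM (v 0 0) ^+ 2 + (RE (v 1 0) ^+ 2 + IM (v 1 0) ^+ 2).
Lemma sqn_ge0 v : 0 <= sqn v.
Proof. by rewrite /sqn !addr_ge0 ?sqr_ge0. Qed.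
Lemma normc_sq x : Normc.normc x ^+ 2 = RE x ^+ 2 + IM x ^+ 2.
Proof. by case: x => a b /=; rewrite sqr_sqrtr // addr_ge0 ?sqr_ge0. Qed.
Lemma vnormE v : vnorm v = Num.sqrt (sqn v).
Proof.
rewrite /vnorm !big_ord_recl big_ord0 addr0 !normc_sq.
by have -> : (lift ord0 ord0 : 'I_2) = 1 by apply: val_inj.
Qed.
Lemma sqn1 v : vnorm v = 1 -> sqn v = 1.
Proof.
rewrite vnormE => h; have := sqr_sqrtr (sqn_ge0 v); rewrite h expr1n => <- //.
Qed.
Definition e0 : 'cV[R[i]]_2 := delta_mx 0 0.
Definition e1 : 'cV[R[i]]_2 := delta_mx 1 0.
Lemma sqn_e0 : sqn e0 = 1.
Proof. by rewrite /sqn /e0 !mxE /=; lra. Qed.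
Lemma sqn_e1 : sqn e1 = 1.
Proof. by rewrite /sqn /e1 !mxE /=; lra. Qed.

Lemma opnorm_exact N s : 0 <= s -> (forall v, sqn (N *m v) = s * sqn v) ->
  opnorm N = Num.sqrt s.
Proof.
move=> s0 h; rewrite /opnorm.
have -> : [set vnorm (N *m x) | x in [set x : 'cV[R[i]]_2 | vnorm x = 1]] = [set Num.sqrt s].
  apply/seteqP; split => y.
    by case=> x /= /sqn1 hx <-; rewrite vnormE h hx mulr1.
  move=> /= ->; exists e0; first by rewrite /= vnormE sqn_e0 sqrtr1.
  by rewrite vnormE h sqn_e0 mulr1.
exact: sup1.
Qed.

Lemma row_bound (m0 m1 x0 x1 : R[i]) :
  RE (m0 * x0 + m1 * x1) ^+ 2 + IM (m0 * x0 + m1 * x1) ^+ 2 <=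
  (RE m0 ^+ 2 + IM m0 ^+ 2 + (RE m1 ^+ 2 + IM m1 ^+ 2)) *
  (RE x0 ^+ 2 + IM x0 ^+ 2 + (RE x1 ^+ 2 + IM x1 ^+ 2)).
Proof.
rewrite cReD cImD !cReM !cImM.
move: (RE m0) (IM m0) (RE m1) (IM m1) (RE x0) (IM x0) (RE x1) (IM x1) => a1 a2 b1 b2 c1 c2 d1 d2.
rewrite -subr_ge0.
have -> : forall X Y : R, X - Y = X - Y by [].
set L := (X in 0 <= X).
have -> : L = (a1 * d1 + a2 * d2 - b1 * c1 - b2 * c2) ^+ 2 + (a2 * d1 - a1 * d2 - b2 * c1 + b1 * c2) ^+ 2.
  rewrite /L; ring.
by rewrite addr_ge0 ?sqr_ge0.
Qed.

Definition frob (N : 'M[R[i]]_2) : R :=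
  (RE (N 0 0) ^+ 2 + IM (N 0 0) ^+ 2 + (RE (N 0 1) ^+ 2 + IM (N 0 1) ^+ 2)) +
  (RE (N 1 0) ^+ 2 + IM (N 1 0) ^+ 2 + (RE (N 1 1) ^+ 2 + IM (N 1 1) ^+ 2)).

Lemma sqn_bound N v : sqn (N *m v) <= frob N * sqn v.
Proof.
rewrite /sqn !mul2E /frob mulrDl.
apply: lerD; exact: row_bound.
Qed.

Lemma opnorm_ge N v : sqn v = 1 -> Num.sqrt (sqn (N *m v)) <= opnorm N.
Proof.
move=> hv; apply: sup_upper_bound; last by exists v; [rewrite /= vnormE hv sqrtr1 | rewrite vnormE].
split; first by exists (vnorm (N *m v)), v => //=; rewrite vnormE hv sqrtr1.
exists (Num.sqrt (frob N)) => y [x /= /sqn1 hx <-].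
rewrite vnormE ler_sqrt; last by rewrite /frob !addr_ge0 ?sqr_ge0.
by have := sqn_bound N x; rewrite hx mulr1.
Qed.
End S.

Arguments dot {R}. Arguments cross {R}. Arguments nrm {R}. Arguments mkV {R}. Arguments final_ineq {R}.
Section S2.
Local Open Scope complex_scope.
Local Open Scope classical_set_scope.
Variable R : realType.
Lemma lift01 : lift ord0 ord0 = 1 :> 'I_2. Proof. by apply: val_inj. Qed.
Lemma commE (X Y : 'M[R[i]]_2) i j :
  comm X Y i j = (X i 0 * Y 0 j + X i 1 * Y 1 j) - (Y i 0 * X 0 j + Y i 1 * X 1 j).
Proof. by rewrite /comm !mxE !big_ord_recl !big_ord0 !addr0 lift01. Qed.
Lemma herm_RI (M : 'M[R[i]]_2) : herm2 M ->
  [/\ IM (M 0 0) = 0, IM (M 1 1) = 0, RE (M 1 0) = RE (M 0 1) & IM (M 1 0) = - IM (M 0 1)].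
Proof.
move=> h; have h00 := h 0 0; have h11 := h 1 1; have h10 := h 1 0.
split.
- by move: h00; case: (M 0 0) => a b [] /eqP; rewrite -subr_eq0 opprK -mulr2n mulrn_eq0 /= => /eqP.
- by move: h11; case: (M 1 1) => a b [] /eqP; rewrite -subr_eq0 opprK -mulr2n mulrn_eq0 /= => /eqP.
- by rewrite h10 cReJ.
- by rewrite h10 cImJ.
Qed.
Definition hvec (M : 'M[R[i]]_2) : V3 R :=
  mkV (RE (M 0 1)) (IM (M 0 1)) ((RE (M 0 0) - RE (M 1 1)) / 2).
Lemma comm_sqn A B v : herm2 A -> herm2 B ->
  sqn (comm A B *m v) = (4 * dot (cross (hvec A) (hvec B)) (cross (hvec A) (hvec B))) * sqn v.
Proof.
move=> /herm_RI [a1 a2 a3 a4] /herm_RI [b1 b2 b3 b4].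
rewrite /sqn !mul2E !commE.
rewrite !(cReD, cImD, cReN, cImN, cReM, cImM) a1 a2 a3 a4 b1 b2 b3 b4.
rewrite /hvec /cross /dot /=.
by field.
Qed.
Lemma sqrt4 : Num.sqrt (4 : R) = 2.
Proof. have -> : (4 : R) = 2 ^+ 2 by rewrite expr2; lra. by rewrite sqrtr_sqr ger0_norm. Qed.
Lemma opnorm_comm A B : herm2 A -> herm2 B ->
  opnorm (comm A B) = 2 * nrm (cross (hvec A) (hvec B)).
Proof.
move=> hA hB; rewrite (@opnorm_exact _ _ (4 * dot (cross (hvec A) (hvec B)) (cross (hvec A) (hvec B)))).
- by rewrite sqrtrM ?sqrt4.
- by rewrite mulr_ge0 ?dot_ge0.
- by move=> v; apply: comm_sqn.
Qed.
Lemma opnorm_herm_ge A : herm2 A -> nrm (hvec A) <= opnorm A.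
Proof.
move=> /[dup] hA /herm_RI [a1 a2 a3 a4].
have h0 := opnorm_ge A (@sqn_e0 R); have h1 := opnorm_ge A (@sqn_e1 R).
move: h0 h1; rewrite /sqn !mul2E /e0 /e1 !mxE /=.
rewrite !(cReD, cImD, cReN, cImN, cReM, cImM) /= a1 a2 a3 a4.
rewrite /nrm /dot /hvec /=.
set p := RE (A 0 0); set q := RE (A 1 1); set x := RE (A 0 1); set y := IM (A 0 1).
move=> h0 h1.
have [hpq|hpq] := lerP (q ^+ 2) (p ^+ 2).
- apply: le_trans h0; rewrite ler_sqrt; last by rewrite !addr_ge0 ?sqr_ge0.
  nra.
- apply: le_trans h1; rewrite ler_sqrt; last by rewrite !addr_ge0 ?sqr_ge0.
  nra.
Qed.
Lemma eig_sq B l : herm2 B -> eigenvalue B (Complex l 0) ->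
  (l - (RE (B 0 0) + RE (B 1 1)) / 2) ^+ 2 = nrm (hvec B) ^+ 2.
Proof.
move=> /herm_RI [b1 b2 b3 b4] /eigenvalueP [v hv vn0].
set lam := Complex l 0 in hv.
have E1 : (v *m B) 0 0 = (lam *: v) 0 0 by rewrite hv.
have E2 : (v *m B) 0 1 = (lam *: v) 0 1 by rewrite hv.
move: E1 E2; rewrite /= !mul2E !mxE => E1 E2.
set D := (B 0 0 - lam) * (B 1 1 - lam) - B 0 1 * B 1 0.
have D0 : D = 0.
  apply/eqP; apply: contraNT vn0 => Dn0; apply/eqP/rowP => j; rewrite mxE.
  have h0 : D * v 0 0 = 0.
    have -> : D * v 0 0 = (B 1 1 - lam) * (v 0 0 * B 0 0 + v 0 1 * B 1 0 - lam * v 0 0)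
         - B 1 0 * (v 0 0 * B 0 1 + v 0 1 * B 1 1 - lam * v 0 1) by rewrite /D; ring.
    by rewrite E1 E2 !subrr !mulr0 subrr.
  have h1 : D * v 0 1 = 0.
    have -> : D * v 0 1 = (B 0 0 - lam) * (v 0 0 * B 0 1 + v 0 1 * B 1 1 - lam * v 0 1)
         - B 0 1 * (v 0 0 * B 0 0 + v 0 1 * B 1 0 - lam * v 0 0) by rewrite /D; ring.
    by rewrite E1 E2 !subrr !mulr0 subrr.
  have {}h0 : v 0 0 = 0 by move/eqP: h0; rewrite mulf_eq0 (negPf Dn0) => /eqP.
  have {}h1 : v 0 1 = 0 by move/eqP: h1; rewrite mulf_eq0 (negPf Dn0) => /eqP.
  case: j => [[|[|k]] hk].
  - by rewrite -h0; congr (v _ _); apply: val_inj.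
  - by rewrite -h1; congr (v _ _); apply: val_inj.
  - by [].
move: D0; rewrite /D => /(congr1 (@complex.Re R)).
rewrite !(cReD, cImD, cReN, cImN, cReM, cImM) /= b1 b2 b3 b4.
rewrite nrm_sq /dot /hvec /=.
set p := RE (B 0 0); set q := RE (B 1 1); set x := RE (B 0 1); set y := IM (B 0 1).
move=> h; apply/eqP; rewrite -subr_eq0; apply/eqP.
by rewrite -[RHS]h; field.
Qed.

Lemma gap B : herm2 B -> lmax B - lmin B <= 2 * nrm (hvec B).
Proof.
move=> hB; set m := (RE (B 0 0) + RE (B 1 1)) / 2; set n := nrm (hvec B).
have n0 : 0 <= n := nrm_ge0 _ _.
have bnd : forall l, eigenvalue B (Complex l 0) -> m - n <= l /\ l <= m + n.
  move=> l /(eig_sq hB); rewrite -/m -/n => h.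
  have : (l - m - n) * (l - m + n) == 0.
    apply/eqP; have -> : (l - m - n) * (l - m + n) = (l - m) ^+ 2 - n ^+ 2 by ring.
    by rewrite h subrr.
  by rewrite mulf_eq0 => /orP [] /eqP h'; split; lra.
rewrite /lmax /lmin.
set S := [set l : R | eigenvalue B (Complex l 0)].
have [[l0 Sl0]|S0] := pselect (exists l, S l).
- have ne : S !=set0 by exists l0.
  have h1 : sup S <= m + n by apply: ge_sup => // y /bnd [].
  have h2 : m - n <= inf S by apply: lb_le_inf => // y /bnd [].
  lra.
- have -> : S = set0 by apply/seteqP; split => y //= Sy; apply: S0; exists y.
  rewrite sup0 inf0; lra.
Qed.
End S2.

Unset Implicit Arguments.
Theorem lemma3p6 (R : realType) (A B C : 'M[R[i]]_2) (xi eps : R) :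
  herm2 A -> herm2 B -> herm2 C ->
  0 < xi -> 0 <= eps -> lmax B - lmin B > xi ->
  opnorm (comm A B) <= eps -> opnorm (comm B C) <= eps ->
  opnorm (comm A C) <= 2 * eps / xi * (opnorm A + opnorm C + eps / xi) /\
  (opnorm A <= 1 -> opnorm C <= 1 -> eps <= xi -> 0 < eps ->
   opnorm (comm A C) <= 4 * eps / xi + 2 * eps ^+ 2 / xi ^+ 2 /\
   4 * eps / xi + 2 * eps ^+ 2 / xi ^+ 2 <= 6 * eps / xi).
Proof.
move=> hA hB hC xi0 e0 hgap hab hbc.
have g := gap hB.
rewrite (opnorm_comm hA hB) in hab; rewrite (opnorm_comm hB hC) in hbc.
have oa := opnorm_herm_ge hA; have oc := opnorm_herm_ge hC.
have hb : xi < 2 * nrm (hvec B) by lra.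
have first := final_ineq (hvec A) (hvec B) (hvec C) eps xi (opnorm A) (opnorm C) xi0 e0 hb hab hbc oa oc.
rewrite (opnorm_comm hA hC).
split => //.
move=> oA1 oC1 exi epos.
set u := eps / xi.
have u0 : 0 <= u by rewrite /u divr_ge0 // ltW.
have u1 : u <= 1 by rewrite /u ler_pdivrMr // mul1r.
have E1 : 2 * eps / xi = 2 * u by rewrite /u mulrA.
have E2 : 4 * eps / xi + 2 * eps ^+ 2 / xi ^+ 2 = 4 * u + 2 * u ^+ 2.
  by rewrite /u; field; rewrite gt_eqF.
have E3 : 6 * eps / xi = 6 * u by rewrite /u mulrA.
rewrite E2 E3; rewrite E1 -/u in first.
split.
- apply: le_trans first _.
  have : 2 * u * (opnorm A + opnorm C + u) <= 2 * u * (2 + u).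
    by apply: ler_wpM2l; [rewrite mulr_ge0 | lra].
  have -> : 2 * u * (2 + u) = 4 * u + 2 * u ^+ 2 by ring.
  done.
- have : u * u <= 1 * u by apply: ler_wpM2r.
  rewrite -expr2 mul1r.
  lra.
Qed.
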